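(* Let $N=\{1,\dots,n\}$ and let $F:2^N\to\mathbb{R}$ be quasi-submodular. Let $X_1=\{i\in N: F(i\mid N-i)>0\}$ and $Y_1=\{i\in N: F(i\mid\emptyset)\ge 0\}$. Then every global maximizer of $F$ lies in $[X_1,Y_1]$, i.e., for every $X_*\in\arg\max_{X\subseteq N}F(X)$, $X_1\subseteq X_*\subseteq Y_1$.
   Context: For $A\subseteq N$ and $i\in N$, write $A+i=A\cup\{i\}$, $A-i=A\setminus\{i\}$, and $F(i\mid A)=F(A+i)-F(A)$. $F$ is quasi-submodular if for all $X,Y\subseteq N$ both hold: $F(X\cap Y)\ge F(X)\Rightarrow F(Y)\ge F(X\cup Y)$, and $F(X\cap Y)>F(X)\Rightarrow F(Y)>F(X\cup Y)$. $[A,B]=\{U: A\subseteq U\subseteq B\}$. *)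

(* Defs.v *)
From mathcomp Require Import all_boot all_order all_algebra.
From mathcomp Require Import reals.
Set Implicit Arguments. Unset Strict Implicit. Unset Printing Implicit Defensive.
Import Order.TTheory GRing.Theory Num.Theory.
Local Open Scope ring_scope.

(* Ground set N = {1,...,n} is represented by 'I_n; set functions F : {set 'I_n} -> R. *)

Definition marg (R : realType) (n : nat) (F : {set 'I_n} -> R) (i : 'I_n) (A : {set 'I_n}) : R :=
  F (i |: A) - F A.

Definition quasi_submodular (R : realType) (n : nat) (F : {set 'I_n} -> R) : Prop :=
  forall X Y : {set 'I_n},
    (F X <= F (X :&: Y) -> F (X :|: Y) <= F Y) /\
    (F X < F (X :&: Y) -> F (X :|: Y) < F Y).

Definition is_global_max (R : realType) (n : nat) (F : {set 'I_n} -> R) (X : {set 'I_n}) : Prop :=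
  forall Y : {set 'I_n}, F Y <= F X.

(* Main.v *)
Require Import Defs.
From mathcomp Require Import all_boot all_order all_algebra.
From mathcomp Require Import reals.
Import Order.TTheory GRing.Theory Num.Theory.
Local Open Scope ring_scope.

Theorem lemma7 (R : realType) (n : nat) (F : {set 'I_n} -> R)
  (hF : quasi_submodular F) (Xs : {set 'I_n}) (hX : is_global_max F Xs) :
  [set i | 0 < marg F i ([set: 'I_n] :\ i)] \subset Xs /\
  Xs \subset [set i | 0 <= marg F i set0].
Proof.
split; apply/subsetP => i; rewrite inE /marg.
- rewrite subr_gt0 => Hi.
  have E : i |: ([set: 'I_n] :\ i) = [set: 'I_n] by rewrite setD1K ?inE.
  rewrite E in Hi.
  apply/negPn/negP => Hn.
  have [h1 _] := hF (i |: Xs) ([set: 'I_n] :\ i).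
  have EI : (i |: Xs) :&: ([set: 'I_n] :\ i) = Xs.
    apply/setP => j; rewrite !inE andbT; case: (eqVneq j i) => [->|] /=.
      by rewrite (negbTE Hn).
    by rewrite andbT.
  have EU : (i |: Xs) :|: ([set: 'I_n] :\ i) = [set: 'I_n].
    by apply/setP => j; rewrite !inE; case: (j == i); rewrite ?orbT ?andbT.
  rewrite EI EU in h1.
  have := hX (i |: Xs).
  move=> H; have := h1 H. by rewrite leNgt Hi.
- move=> Hi; rewrite subr_ge0.
  apply/negPn/negP; rewrite -ltNge => Hlt.
  have [_ h2] := hF [set i] (Xs :\ i).
  have EI : [set i] :&: (Xs :\ i) = set0.
    by apply/setP => j; rewrite !inE; case: (j == i); rewrite ?andbF.
  have EU : [set i] :|: (Xs :\ i) = Xs by rewrite setD1K.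
  rewrite EI EU in h2.
  have := h2; rewrite setU0 in Hlt.
  move=> /(_ Hlt). by rewrite ltNge hX.
Qed.
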